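(* Let $N\ge1$, $H=(H_1,\dots,H_N)\in]0,1[^N$, $a\in\mathbb{R}^N\setminus\{(0,\dots,0)\}$, let $S^H$ be the mixed sub-fractional Brownian motion with parameters $N,a,H$, and let $T>0$. Then, with probability $1$, the Hausdorff dimension of the range $S^H([0,T])=\{S^H(t); t\in[0,T]\}\subset\mathbb{R}$ equals $1$.
   Context: Let $(\Omega,\mathcal F,\mathbb P)$ be a probability space. For $K\in]0,1[$, a fractional Brownian motion on $\mathbb{R}$ with Hurst index $K$ is a continuous centered Gaussian process $\{B^K(t),t\in\mathbb{R}\}$ with $\mathrm{Cov}(B^K(t),B^K(s))=\frac12(|t|^{2K}+|s|^{2K}-|t-s|^{2K})$. The sub-fractional Brownian motion (sfBm) of index $K$ is $\xi^K_t=(B^K_t+B^K_{-t})/\sqrt2$, $t\ge0$; it is a continuous centered Gaussian process with $\mathrm{Cov}(\xi^K_t,\xi^K_s)=s^{2K}+t^{2K}-\frac12\big((s+t)^{2K}+|t-s|^{2K}\big)$. For $N\ge1$, $H\in]0,1[^N$, $a\in\mathbb{R}^N\setminus\{0\}$, the mixed sub-fractional Brownian motion (msfBm) is $S^H(t)=\sum_{i=1}^N a_i\xi^{H_i}(t)$, $t\ge0$, where $\xi^{H_1},\dots,\xi^{H_N}$ are independent sfBms with indices $H_1,\dots,H_N$. *)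

(* Defs.v *)
From HB Require Import structures.
From mathcomp Require Import all_boot all_order all_algebra.
From mathcomp Require Import all_classical all_reals all_analysis.
Set Implicit Arguments. Unset Strict Implicit. Unset Printing Implicit Defensive.
Import Order.TTheory GRing.Theory Num.Theory.
Import numFieldNormedType.Exports.
Local Open Scope classical_set_scope.
Local Open Scope ring_scope.

Section Defs.
Context {R : realType}.

(** diameter of a subset of R (an extended real; -oo for the empty set) *)
Definition diam (U : set R) : \bar R :=
  ereal_sup [set (`|x.1 - x.2|)%:E | x in U `*` U].

Definition diam_pow (s : R) (U : set R) : \bar R :=
  if `[< U = set0 >] then 0%E else (fine (diam U) `^ s)%:E.

Definition hausdorff_content (s delta : R) (A : set R) : \bar R :=
  ereal_inf [set (\sum_(0 <= n <oo) diam_pow s (U n))%E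
            | U in [set U : nat -> set R |
                     A `<=` \bigcup_n U n /\ forall n, (diam (U n) <= delta%:E)%E]].

Definition hausdorff_measure (s : R) (A : set R) : \bar R :=
  ereal_sup [set hausdorff_content s delta A | delta in [set delta : R | 0 < delta]].

Definition hausdorff_dim (A : set R) : \bar R :=
  ereal_inf [set s%:E | s in [set s : R | 0 <= s /\ hausdorff_measure s A = 0%E]].

Definition centered_gauss (v : R) : set R -> \bar R :=
  if 0 < v then normal_prob 0 (Num.sqrt v) else @dirac _ R 0 R.

Context {d : measure_display} {Omega : measurableType d}.

(** X : R -> Omega -> R is a centered Gaussian process indexed by [0, +oo)
   with covariance C: every X t is a random variable and every finite linear
   combination sum_k c_k X(t_k) is centered Gaussian with variance
   sum_{k,l} c_k c_l C(t_k,t_l). *)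
Definition centered_gaussian_process (P : probability Omega R)
  (X : R -> Omega -> R) (C : R -> R -> R) : Prop :=
  (forall t, 0 <= t -> measurable_fun setT (X t)) /\
  forall (n : nat) (t : 'I_n -> R) (c : 'I_n -> R),
    (forall k, 0 <= t k) ->
    forall B : set R, measurable B ->
      P ((fun w => \sum_(k < n) c k * X (t k) w) @^-1` B) =
      centered_gauss (\sum_(k < n) \sum_(l < n) c k * c l * C (t k) (t l)) B.

Definition continuous_paths (X : R -> Omega -> R) : Prop :=
  forall w, {within `[0, +oo[%classic, continuous (fun t => X t w)}.

Definition sfbm_cov (K : R) (s t : R) : R :=
  s `^ (2 * K) + t `^ (2 * K)
  - 2^-1 * ((s + t) `^ (2 * K) + `|t - s| `^ (2 * K)).

Definition is_sfbm (P : probability Omega R) (K : R) (X : R -> Omega -> R) : Prop :=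
  continuous_paths X /\ centered_gaussian_process P X (sfbm_cov K).

(** mutual independence of the processes X 0, ..., X (N-1) (indexed by t >= 0):
   product rule on finite-dimensional cylinder events, i.e. independence of
   the generated sigma-algebras (through their generating pi-systems). *)
Definition independent_processes (P : probability Omega R) (N : nat)
  (X : 'I_N -> R -> Omega -> R) : Prop :=
  forall (n : nat) (t : 'I_N -> 'I_n -> R) (B : 'I_N -> 'I_n -> set R),
    (forall i k, 0 <= t i k) -> (forall i k, measurable (B i k)) ->
    P (\bigcap_(i in [set: 'I_N]) [set w | forall k, B i k (X i (t i k) w)]) =
    (\prod_(i < N) P [set w | forall k, B i k (X i (t i k) w)])%E.

Definition msfbm (N : nat) (a : 'I_N -> R) (xi : 'I_N -> R -> Omega -> R)
  (t : R) (w : Omega) : R :=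
  \sum_(i < N) a i * xi i t w.

End Defs.

(* Main.v *)
Require Import Defs.
From HB Require Import structures.
From mathcomp Require Import all_boot all_order all_algebra.
From mathcomp Require Import all_classical all_reals all_analysis.
From mathcomp Require Import ring lra.
Import Order.TTheory GRing.Theory Num.Theory.
Import numFieldNormedType.Exports.
Local Open Scope classical_set_scope.
Local Open Scope ring_scope.
Set Implicit Arguments. Unset Strict Implicit. Unset Printing Implicit Defensive.
Section Det.
Context {R : realType}.

Lemma diam_ge (U : set R) x y : U x -> U y -> ((`|x - y|)%:E <= diam U)%E.
Proof. by move=> Ux Uy; apply: ereal_sup_ubound; exists (x, y). Qed.

Lemma diam_le (U : set R) r : (forall x y, U x -> U y -> `|x - y| <= r) ->
  (diam U <= r%:E)%E.
Proof. by move=> H; apply: ge_ereal_sup => _ [[x y] [/= Ux Uy] <-]; rewrite lee_fin H. Qed.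

Lemma diam_set0 : diam (set0 : set R) = -oo%E.
Proof.
rewrite /diam [X in ereal_sup X](_ : _ = set0) ?ereal_sup0 //.
by apply/seteqP; split => // _ [[x y] [/= []]].
Qed.

Lemma diam_pow_ge0 s (U : set R) : (0 <= diam_pow s U)%E.
Proof. by rewrite /diam_pow; case: ifP => // _; rewrite lee_fin powR_ge0. Qed.

Lemma diam_pow_set0 s : diam_pow s (set0 : set R) = 0%E.
Proof. by rewrite /diam_pow asboolT. Qed.

Lemma diam_pow_ne0 s (U : set R) : U !=set0 -> diam_pow s U = (fine (diam U) `^ s)%:E.
Proof. by move=> /set0P/eqP hU; rewrite /diam_pow asboolF. Qed.

Lemma diam_fin (U : set R) x r : U x -> (diam U <= r%:E)%E ->
  diam U = (fine (diam U))%:E /\ 0 <= fine (diam U) <= r.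
Proof.
move=> Ux dr; have d0 : (0 <= diam U)%E.
  by apply: le_trans (diam_ge Ux Ux); rewrite subrr normr0.
have := d0; have := dr; case: (diam U) => //= t; rewrite !lee_fin => tr t0.
by split => //; rewrite t0 tr.
Qed.


Lemma content_lb (s : R) (A : set R) (c e : R) : 0 <= s <= 1 -> c < e ->
  `[c, e]%classic `<=` A -> (((e - c) / 2)%:E <= hausdorff_content s 1 A)%E.
Proof.
move=> /andP[s0 s1] ce cA; apply: le_ereal_inf_tmp => _ [U [cov dU] <-].
have [x Hx] : exists x : nat -> R, forall n, U n !=set0 -> U n (x n).
  have [f Hf] := @choice nat R (fun n y => U n !=set0 -> U n y) (fun n =>
    match pselect (U n !=set0) with
    | left h => let: exist y hy := cid h in ex_intro _ y (fun=> hy)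
    | right h => ex_intro _ 0 (fun h' => False_ind _ (h h'))
    end).
  by exists f.
pose D n := fine (diam (U n)).
have HD n : [/\ 0 <= D n, ((D n)%:E <= diam_pow s (U n))%E
   & forall y, U n y -> `|y - x n| <= D n].
  have [ne|/set0P/negP/negPn/eqP e0] := pselect (U n !=set0).
    have [dE /andP[d0 d1]] := diam_fin (Hx _ ne) (dU n).
    split => //.
      rewrite diam_pow_ne0 // lee_fin -/(D n).
      have [->|dn0] := eqVneq (D n) 0; first exact: powR_ge0.
      by apply: ger1_powR => //; rewrite lt0r dn0 d0.
    move=> y Uy; have := diam_ge Uy (Hx _ ne); rewrite dE lee_fin //.
  rewrite /D e0 diam_set0 diam_pow_set0 /=; split => //.
pose V n : set R := `[x n - D n, x n + D n]%classic.
have mV n : measurable (V n) by rewrite /V; exact: measurable_itv.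
apply: (@le_trans _ _ (2^-1%:E * lebesgue_measure (\bigcup_n V n))%E).
  rewrite EFinM muleC; apply: lee_wpmul2l; first by rewrite lee_fin invr_ge0.
  have -> : (e - c)%:E = lebesgue_measure (`[c, e]%classic : set R).
    by rewrite lebesgue_measure_itv /= lte_fin ce EFinB.
  apply: le_measure; [rewrite inE; exact: measurable_itv|rewrite inE; apply: bigcup_measurable => k _; exact: mV|].
  move=> y /cA /cov [n _ Uny]; exists n => //=.
  have [_ _ h] := HD n; have := h _ Uny.
  by rewrite /V /= in_itv /= ler_distl => ->.
apply: (@le_trans _ _ (2^-1%:E * \sum_(0 <= n <oo) lebesgue_measure (V n))%E).
  apply: lee_wpmul2l; first by rewrite lee_fin invr_ge0.
  by apply: measure_sigma_subadditive => //; apply: bigcup_measurable => k _; exact: mV.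
rewrite -nneseriesZl; last by move=> *; exact: measure_ge0.
apply: lee_nneseries => [n _ _|n _]; first by apply: mule_ge0 => //; exact: measure_ge0.
rewrite lebesgue_measure_itv /=.
have [D0 Dp _] := HD n.
case: ifPn => [_|]; last by move=> _; rewrite mule0 diam_pow_ge0.
apply: le_trans Dp; rewrite -EFinD -EFinM lee_fin.
have -> : x n + D n - (x n - D n) = D n * 2 by ring.
by rewrite mulrC -mulrA mulfV ?pnatr_eq0 // mulr1.
Qed.


Lemma content_ub (s δ ε : R) (A : set R) (c e : R) : 1 < s -> 0 < δ -> 0 < ε ->
  c <= e -> A `<=` `[c, e]%classic -> (hausdorff_content s δ A <= ε%:E)%E.
Proof.
move=> s1 d0 e0 ce Ace.
set L := e - c; have L0 : 0 <= L by rewrite subr_ge0.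
set q := (ε / (L + 1)) `^ (s - 1)^-1.
have q0 : 0 < q by apply: powR_gt0; apply: divr_gt0 => //; lra.
set h := Num.min δ (Num.min 1 q).
have h0 : 0 < h by rewrite !lt_min d0 ltr01 q0.
have hd : h <= δ by rewrite ge_min lexx.
have h1 : h <= 1 by rewrite !ge_min lexx !orbT.
have hq : h <= q by rewrite !ge_min lexx !orbT.
set m := (Num.truncn (L / h)).+1.
pose I k : set R := `[c + k%:R * h, c + k.+1%:R * h]%classic.
pose U k : set R := if (k < m)%N then I k else set0.
have dpU k : (diam_pow s (U k) <= (h `^ s)%:E)%E.
  rewrite /U; case: ifP => _; last by rewrite diam_pow_set0 lee_fin powR_ge0.
  have Uc : I k (c + k%:R * h).
    by rewrite /I /= in_itv /= lexx /= lerD2l ler_pM2r // ler_nat.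
  have dl : (diam (I k) <= h%:E)%E.
    apply: diam_le => x y; rewrite /I /= !in_itv /= => /andP[x1 x2] /andP[y1 y2].
    have : k.+1%:R * h = k%:R * h + h by rewrite -natr1 mulrDl mul1r.
    move=> hh; rewrite hh in x2 y2; rewrite ler_norml; apply/andP; split; lra.
  rewrite diam_pow_ne0; last by exists (c + k%:R * h).
  have [_ /andP[f0 fh]] := diam_fin Uc dl.
  by rewrite lee_fin ge0_ler_powR // ?nnegrE ?(ltW h0) //; lra.
apply: (@le_trans _ _ (\sum_(0 <= k <oo) diam_pow s (U k))%E).
  apply: ereal_inf_lbound; exists U => //; split.
    move=> y /Ace; rewrite /= in_itv /= => /andP[cy ye].
    have yc0 : 0 <= (y - c) / h by apply: divr_ge0; lra.
    set k := Num.truncn ((y - c) / h).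
    have km : (k < m)%N.
      by rewrite ltnS le_truncn // ler_pM2r ?invr_gt0 // /L; lra.
    exists k => //; rewrite /U km /I /= in_itv /=.
    have /andP[k1 k2] := truncn_itv yc0.
    rewrite -/k in k1 k2.
    rewrite ler_pdivlMr // in k1; rewrite ltr_pdivrMr // in k2.
    apply/andP; split; lra.
  move=> k; rewrite /U; case: ifP => _; last by rewrite diam_set0 leNye.
  apply: diam_le => x y; rewrite /I /= !in_itv /= => /andP[x1 x2] /andP[y1 y2].
  have : k.+1%:R * h = k%:R * h + h by rewrite -natr1 mulrDl mul1r.
  move=> hh; rewrite hh in x2 y2; rewrite ler_norml; apply/andP; split; lra.
rewrite (nneseries_split 0 m); last by move=> *; exact: diam_pow_ge0.
rewrite [X in (_ + X)%E]eseries0; last first.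
  by move=> i hi _; rewrite /U ltnNge -(add0n m) hi /= diam_pow_set0.
rewrite adde0 add0n.
apply: (@le_trans _ _ (\sum_(0 <= k < m) (h `^ s))%:E).
  by rewrite -sumEFin; apply: lee_sum => k _; exact: dpU.
rewrite lee_fin sumr_const_nat subn0.
have hs : h `^ s = h * h `^ (s - 1) by rewrite mulr_powRB1 //; lra.
have hs1 : h `^ (s - 1) <= ε / (L + 1).
  apply: (@le_trans _ _ (q `^ (s - 1))).
    by apply: ge0_ler_powR => //; rewrite ?nnegrE; lra.
  rewrite /q -powRrM mulVf ?powRr1 //; last by lra.
  by apply: divr_ge0; lra.
have mh : m%:R * h <= L + 1.
  rewrite /m -natr1 mulrDl mul1r.
  have := truncn_le (L / h); rewrite divr_ge0 // ?(ltW h0) //.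
  move=> /idP; rewrite ler_pdivlMr //; lra.
rewrite hs -mulr_natl mulrA.
apply: (@le_trans _ _ ((L + 1) * (ε / (L + 1)))).
  apply: ler_pM => //; first by apply: mulr_ge0; [exact: ler0n|exact: ltW].
  exact: powR_ge0.
by rewrite mulrC mulfVK //; lra.
Qed.


Lemma content_ge0 s δ (A : set R) : (0 <= hausdorff_content s δ A)%E.
Proof.
apply: le_ereal_inf_tmp => _ [U _ <-]; apply: nneseries_ge0 => *; exact: diam_pow_ge0.
Qed.

Lemma hm_pos s (A : set R) c e : 0 <= s <= 1 -> c < e ->
  `[c, e]%classic `<=` A -> hausdorff_measure s A != 0%E.
Proof.
move=> s01 ce cA; apply/negP => /eqP h0.
have : (hausdorff_content s 1 A <= hausdorff_measure s A)%E.
  by rewrite /hausdorff_measure; apply: ereal_sup_ubound; exists 1 => //=.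
rewrite h0 => /(le_trans (content_lb s01 ce cA)).
by rewrite lee_fin; apply/negP; rewrite -ltNge; apply: divr_gt0 => //; lra.
Qed.

Lemma hm_zero s (A : set R) c e : 1 < s -> c <= e ->
  A `<=` `[c, e]%classic -> hausdorff_measure s A = 0%E.
Proof.
move=> s1 ce Ace; apply/eqP; rewrite eq_le; apply/andP; split.
  apply: ge_ereal_sup => _ [δ /= δ0 <-].
  apply/lee_addgt0Pr => ε ε0; rewrite add0e.
  exact: (content_ub s1 δ0 ε0 ce Ace).
apply: le_trans (content_ge0 s 1 A) _.
by rewrite /hausdorff_measure; apply: ereal_sup_ubound; exists 1 => //=.
Qed.

Lemma hdim_one (A : set R) c e c' e' : c < e -> c' <= e' ->
  `[c, e]%classic `<=` A -> A `<=` `[c', e']%classic -> hausdorff_dim A = 1%E.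
Proof.
move=> ce ce' cA Ace; apply/eqP; rewrite eq_le; apply/andP; split.
  apply/lee_addgt0Pr => ε ε0.
  apply: ereal_inf_lbound; exists (1 + ε) => //; split; first lra.
  by apply: (hm_zero _ ce' Ace); lra.
apply: le_ereal_inf_tmp => _ [s [s0 hs] <-]; rewrite lee_fin.
rewrite leNgt; apply/negP => s1.
have s01 : 0 <= s <= 1 by rewrite s0 ltW.
by have := hm_pos s01 ce cA; rewrite hs eqxx.
Qed.


Lemma range_dim (f : R -> R) (T : R) : 0 < T -> {within `[0, T], continuous f} ->
  f 0 != f T -> hausdorff_dim [set f t | t in `[0, T]] = 1%E.
Proof.
move=> T0 cf fne.
have T0' : 0 <= T by exact: ltW.
have [tM tMi HM] := EVT_max T0' cf.
have [tm tmi Hm] := EVT_min T0' cf.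
apply: (@hdim_one _ (Num.min (f 0) (f T)) (Num.max (f 0) (f T)) (f tm) (f tM)).
- by rewrite lt_max !gt_min !ltxx /= orbF orbC -neq_lt.
- by apply: Hm.
- move=> v; rewrite /= in_itv /= => hv.
  have [t ti ft] := IVT T0' cf hv.
  by exists t.
- move=> _ [t ti <-]; rewrite /= in_itv /=.
  by rewrite Hm ?HM //; rewrite inE.
Qed.

End Det.
Section Prob.
Context {R : realType} {d : measure_display} {Omega : measurableType d}.
Variable P : probability Omega R.

Lemma prob_fin (A : set Omega) : measurable A -> P A = (fine (P A))%:E.
Proof.
move=> mA; rewrite fineK // ge0_fin_numE ?measure_ge0 //.
by apply: le_lt_trans (probability_le1 P mA) _; exact: ltry.
Qed.

Lemma indep_pi_lambda (E0 : set Omega) (G : set (set Omega)) :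
  measurable E0 -> setI_closed G -> G `<=` measurable ->
  (forall E, G E -> P (E0 `&` E) = (P E0 * P E)%E) ->
  forall E, <<s G >> E -> P (E0 `&` E) = (P E0 * P E)%E.
Proof.
move=> mE0 GI Gm HG.
pose L := [set E : set Omega | measurable E /\ P (E0 `&` E) = (P E0 * P E)%E].
suff : <<s G >> `<=` L by move=> h E /h [].
apply: lambda_system_subset => //; last first.
  by move=> E GE; split; [exact: Gm|exact: HG].
apply/dynkin_lambda_system; split.
- by split => //; rewrite setIT probability_setT mule1.
- move=> E [mE hE]; split; first exact: measurableC.
  have fE0 : (P E0 < +oo)%E by rewrite (prob_fin mE0) ltry.
  have fT : (P setT < +oo)%E by rewrite probability_setT ltry.
  rewrite -setDE measureD //.
  rewrite -[LHS]/(P E0 - P (E0 `&` E))%E hE.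
  rewrite -setTD measureD // setTI.
  rewrite -[X in (_ = _ * X)%E]/(P setT - P E)%E probability_setT.
  rewrite (prob_fin mE0) (prob_fin mE) -!EFinM -!EFinB.
  by congr (_%:E); rewrite mulrBr mulr1.
- move=> F tF hF.
  have mF n : measurable (F n) by case: (hF n).
  split; first by apply: bigcup_measurable => k _; exact: mF.
  have tF' : trivIset setT (fun n => E0 `&` F n).
    apply/trivIsetP => i j _ _ ij; rewrite setIACA setIid.
    by move/trivIsetP : tF => /(_ i j I I ij) ->; rewrite setI0.
  rewrite setI_bigcupr measure_bigcup //=; last by move=> n _; apply: measurableI.
  have -> : P (\bigcup_k F k) = (\sum_(0 <= i <oo | i \in [set: nat]) P (F i))%E.
    by apply: measure_bigcup => // n _; exact: mF.
  rewrite (prob_fin mE0) -nneseriesZl; last by move=> *; exact: measure_ge0.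
  apply: eq_eseriesr => n _; rewrite (hF n).2 -(prob_fin mE0) //.
Qed.


Section indep.
Variables (N : nat) (xi : 'I_N -> R -> Omega -> R) (i0 : 'I_N) (T : R).
Hypothesis T0 : 0 <= T.
Hypothesis mxi : forall i, measurable_fun setT (xi i T).
Hypothesis ind : independent_processes P xi.

Let mpre i (B : set R) : measurable B -> measurable (xi i T @^-1` B).
Proof. by move=> mB; rewrite -[X in measurable X]setTI; exact: mxi. Qed.

Let cyl (B : 'I_N -> set R) : set Omega := [set w | forall j, j != i0 -> B j (xi j T w)].

Let G := [set E | exists2 B : 'I_N -> set R, (forall j, measurable (B j)) & E = cyl B].

Let mcyl B : (forall j, measurable (B j)) -> measurable (cyl B).
Proof.
move=> mB.
have -> : cyl B = \bigcap_(j in [set j | j != i0]) (xi j T @^-1` B j).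
  by apply/seteqP; split => w /= h j /h.
by apply: fin_bigcap_measurable; [exact: finite_finset|move=> j _; exact: mpre].
Qed.

Let one_set (Q : set R) (i : 'I_N) :
  [set w | forall k : 'I_1, Q (xi i T w)] = xi i T @^-1` Q.
Proof. by apply/seteqP; split => v /=; [move=> h; exact: h ord0|move=> h k]. Qed.

Let indep_cyl (C : set R) B : measurable C -> (forall j, measurable (B j)) ->
  P (xi i0 T @^-1` C `&` cyl B) =
  (P (xi i0 T @^-1` C) * \prod_(j < N | j != i0) P (xi j T @^-1` B j))%E.
Proof.
move=> mC mB.
pose B' (i : 'I_N) (k : 'I_1) := if i == i0 then C else B i.
have mB' : forall i k, measurable (B' i k) by move=> i k; rewrite /B'; case: ifP.
have eS : \bigcap_i [set w | forall k : 'I_1, B' i k (xi i T w)] =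
    xi i0 T @^-1` C `&` cyl B.
  apply/seteqP; split => w /=.
  - move=> h; split; first by have := h i0 I ord0; rewrite /B' eqxx.
    by move=> j ji; have := h j I ord0; rewrite /B' (negbTE ji).
  - move=> [hC hB] i _ k; rewrite /B'; case: eqP => [->|/eqP ne] //; exact: hB.
rewrite -eS (ind (fun (i : 'I_N) (k : 'I_1) => T0) mB') (bigD1 i0) //=.
congr (_ * _)%E; first by rewrite /B' eqxx one_set.
by apply: eq_bigr => j ji; rewrite /B' (negbTE ji) one_set.
Qed.


Let cyl_prob B : (forall j, measurable (B j)) ->
  P (cyl B) = (\prod_(j < N | j != i0) P (xi j T @^-1` B j))%E.
Proof.
move=> mB; have := @indep_cyl setT B measurableT mB.
by rewrite preimage_setT setTI probability_setT mul1e.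
Qed.

Definition Zfun (b : 'I_N -> R) (w : Omega) : R :=
  \sum_(j < N) (if j != i0 then b j * xi j T w else 0).

Lemma indep_XZ (b : 'I_N -> R) (C D : set R) : measurable C -> measurable D ->
  P (xi i0 T @^-1` C `&` Zfun b @^-1` D) =
  (P (xi i0 T @^-1` C) * P (Zfun b @^-1` D))%E.
Proof.
move=> mC mD.
set Z := Zfun b.
apply: (indep_pi_lambda (G:=G) (mpre i0 mC)).
- move=> _ _ [B mB ->] [B' mB' ->]; exists (fun j => B j `&` B' j).
    by move=> j; exact: measurableI.
  apply/seteqP; split => w /=.
    by move=> [h1 h2] j ji; split; [exact: h1|exact: h2].
  by move=> h; split => j /h [].
- by move=> _ [B mB ->]; exact: mcyl.
- by move=> _ [B mB ->]; rewrite indep_cyl // cyl_prob.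
have mZ : @measurable_fun _ _ (g_sigma_algebraType G) R setT Z.
  apply: measurable_sum => j.
  case: (eqVneq j i0) => [->|ji] /=; first exact: measurable_cst.
  apply: measurable_realfun.measurable_funM; first exact: measurable_cst.
  move=> _ Y mY; rewrite setTI; apply: sub_sigma_algebra.
  exists (fun k => if k == j then Y else setT).
    by move=> k; case: ifP.
  apply/seteqP; split => w /=.
    by move=> h k _; case: eqP => [->|] //.
  by move=> /(_ j ji); rewrite eqxx.
by have := mZ measurableT D mD; rewrite setTI.
Qed.

End indep.


Lemma no_atom_sum (X Z : Omega -> R) (a0 : R) :
  measurable_fun setT X -> measurable_fun setT Z -> a0 != 0 ->
  (forall C D, measurable C -> measurable D ->
     P (X @^-1` C `&` Z @^-1` D) = (P (X @^-1` C) * P (Z @^-1` D))%E) ->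
  (forall r, P (X @^-1` [set r]) = 0%E) ->
  P [set w | a0 * X w + Z w = 0] = 0%E.
Proof.
move=> mX mZ a00 hind hat.
pose Xm : {mfun Omega >-> R} := HB.pack X (isMeasurableFun.Build _ _ _ _ X mX).
pose Zm : {mfun Omega >-> R} := HB.pack Z (isMeasurableFun.Build _ _ _ _ Z mZ).
have mW : measurable_fun setT (fun w => (Z w, X w)) by exact: measurable_fun_pair.
pose Wm : {mfun Omega >-> (R * R)%type} :=
  HB.pack (fun w => (Z w, X w)) (isMeasurableFun.Build _ _ _ _ _ mW).
pose L := [set p : R * R | a0 * p.2 + p.1 = 0].
have mL : measurable L.
  have mg : measurable_fun setT (fun p : R * R => a0 * p.2 + p.1).
    apply: measurable_realfun.measurable_funD; last exact: measurable_fst.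
    apply: measurable_realfun.measurable_funM; first exact: measurable_cst.
    exact: measurable_snd.
  by have := mg measurableT [set 0] (measurable_set1 _); rewrite setTI.
have hprod A B : measurable A -> measurable B ->
    distribution P Wm (A `*` B) = (distribution P Zm A * distribution P Xm B)%E.
  move=> mA mB; rewrite /distribution /pushforward /=.
  rewrite muleC -hind //; congr (P _).
  by apply/seteqP; split => w /= [].
have h := product_measure_unique hprod mL.
have -> : P [set w | a0 * X w + Z w = 0] = distribution P Wm L by [].
rewrite -h /product_measure1 /=.
apply: integral0_eq => z _ /=.
have -> : xsection L z = [set - z / a0].
  apply/seteqP; split => y; rewrite /xsection /= inE /L /=.
    move=> hy; rewrite /= -[LHS](mulKf a00) (_ : a0 * y = - z); first by rewrite mulrC.
    lra.
  by move=> ->; rewrite mulrCA mulfV // mulr1 addNr.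
exact: hat.
Qed.

End Prob.
Section C.
Context {R : realType}.
Lemma within_cont_sum (A : set R) (n : nat) (F : 'I_n -> R -> R) (c : 'I_n -> R) :
  (forall i, {within A, continuous (F i)}) ->
  {within A, continuous (fun t => \sum_(i < n) c i * F i t)}.
Proof.
move=> hF.
have -> : (fun t => \sum_(i < n) c i * F i t) = \sum_(i < n) (fun t => c i * F i t).
  by apply/funext => t; rewrite fct_sumE.
apply: (big_ind (fun g : R -> R => {within A, continuous g})).
- exact: cst_continuous.
- by move=> g h hg hh; exact: within_continuousD.
- move=> i _ x.
  apply: continuousM; first exact: cst_continuous.
  exact: hF.
Qed.
End C.

Section G.
Context {R : realType}.

Lemma cov00 (K : R) : K != 0 -> sfbm_cov K 0 0 = 0.
Proof.
move=> K0; rewrite /sfbm_cov subrr normr0 addr0 powR0 ?mulf_neq0 ?pnatr_eq0 //.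
by rewrite addr0 mulr0 subrr.
Qed.

Lemma covTT_pos (K T : R) : 0 < T -> 0 < K < 1 -> 0 < sfbm_cov K T T.
Proof.
move=> T0 /andP[K0 K1].
have p0 : 2 * K != 0 by rewrite mulf_neq0 ?pnatr_eq0 // gt_eqF.
rewrite /sfbm_cov subrr normr0 powR0 // addr0.
have -> : T + T = 2 * T by rewrite mulr2n mulrDl mul1r.
rewrite powRM //; last exact: ltW.
have y4 : (2 : R) `^ (2 * K) < 4.
  have -> : (4 : R) = 2 `^ 2%:R by rewrite powR_mulrn // expr2; lra.
  rewrite /powR pnatr_eq0 /= ltr_expR ltr_pM2r ?ln_gt0 ?ltr1n //; lra.
have x0 : 0 < T `^ (2 * K) by apply: powR_gt0.
have y0 : 0 <= (2 : R) `^ (2 * K) by apply: powR_ge0.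
set x := T `^ _ in x0 *; set y := 2 `^ _ in y4 y0 *.
nra.
Qed.

Context {d : measure_display} {Omega : measurableType d}.
Variable P : probability Omega R.

Lemma sfbm_law K X t B : is_sfbm P K X -> 0 <= t -> measurable B ->
  P (X t @^-1` B) = centered_gauss (sfbm_cov K t t) B.
Proof.
move=> [_ [_ hg]] t0 mB.
have := hg 1%N (fun _ => t) (fun _ => 1) (fun _ => t0) B mB.
rewrite !big_ord1 !mul1r => <-; congr (P _).
by apply/seteqP; split => w /=; rewrite big_ord1 mul1r.
Qed.

Lemma sfbm_at0 K X : is_sfbm P K X -> K != 0 -> P [set w | X 0 w != 0] = 0%E.
Proof.
move=> hX K0.
have := sfbm_law hX (lexx 0) (measurableC (measurable_set1 (0 : R))).
rewrite cov00 // /centered_gauss ltxx diracE.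
have n0 : (0:R) \notin ~` [set (0:R)] by rewrite notin_setE /= => /(_ erefl).
rewrite (negbTE n0) /= => h; rewrite -[RHS]h.
by congr (P _); apply/seteqP; split => w /= /eqP.
Qed.

Lemma sfbm_noatom K X T r : is_sfbm P K X -> 0 < T -> 0 < K < 1 ->
  P (X T @^-1` [set r]) = 0%E.
Proof.
move=> hX T0 K01.
rewrite (sfbm_law hX (ltW T0) (measurable_set1 r)) /centered_gauss.
by rewrite covTT_pos // /normal_prob integral_set1.
Qed.

End G.

Unset Implicit Arguments.

Theorem lemma16 (R : realType) (d : measure_display) (Omega : measurableType d)
  (P : probability Omega R) (N : nat) (H : 'I_N -> R) (a : 'I_N -> R)
  (xi : 'I_N -> R -> Omega -> R) (T : R) :
  (0 < N)%N ->
  (forall i, 0 < H i < 1) ->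
  (exists i, a i != 0) ->
  (forall i, is_sfbm P (H i) (xi i)) ->
  independent_processes P xi ->
  0 < T ->
  {ae P, forall w : Omega,
     hausdorff_dim [set msfbm a xi t w | t in `[0, T]] = 1%E}.
Proof.
move=> N0 H01 [i0 ai0] hs hind T0.
have mxi i t : 0 <= t -> measurable_fun setT (xi i t).
  by move=> t0; exact: (hs i).2.1 t t0.
have HK i : H i != 0 by case/andP: (H01 i) => h _; rewrite gt_eqF.
pose Bad1 := \big[setU/set0]_(i < N) [set w | xi i 0 w != 0].
pose Bad2 := [set w | msfbm a xi T w = 0].
have neg1 : P.-negligible Bad1.
  apply: (big_ind (fun S => P.-negligible S)).
  - by exists set0; split => //; exact: measure0.
  - by move=> A B hA hB; exact: negligibleU.
  - move=> i _; exists [set w | xi i 0 w != 0]; split => //; last first.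
      exact: sfbm_at0 (hs i) (HK i).
    have := mxi i 0 (lexx 0) measurableT _ (measurableC (measurable_set1 (0 : R))).
    rewrite setTI; congr (measurable _).
    by apply/seteqP; split => w /= /eqP.
have neg2 : P.-negligible Bad2.
  exists Bad2; split => //.
    have mS : measurable_fun setT (msfbm a xi T).
      apply: measurable_sum => i.
      apply: measurable_realfun.measurable_funM; first exact: measurable_cst.
      exact: mxi (ltW T0).
    by have := mS measurableT _ (measurable_set1 (0 : R)); rewrite setTI.
  have -> : Bad2 = [set w | a i0 * xi i0 T w + Zfun xi i0 T a w = 0].
    have eS w : msfbm a xi T w = a i0 * xi i0 T w + Zfun xi i0 T a w.
      by rewrite /msfbm (bigD1 i0) //= /Zfun big_mkcond.
    by apply/seteqP; split => w; rewrite /Bad2 /= eS.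
  apply: (no_atom_sum (P := P)) => //.
  - exact: mxi (ltW T0).
  - rewrite /Zfun; apply: measurable_sum => j; case: (j != i0); last exact: measurable_cst.
    apply: measurable_realfun.measurable_funM; first exact: measurable_cst.
    exact: mxi (ltW T0).
  - move=> C D mC mD; apply: indep_XZ => //; [exact: ltW|move=> i; exact: mxi (ltW T0)].
  - move=> r; apply: sfbm_noatom (hs i0) T0 (H01 i0).
apply: negligibleS (negligibleU neg1 neg2) => w /= nQ.
case: (pselect ((Bad1 `|` Bad2) w)) => // hb; exfalso; apply: nQ.
have x0 i : xi i 0 w = 0.
  apply/eqP; apply/negP => /negP hi; apply: hb; left.
  by rewrite /Bad1 (bigD1 i) //=; left.
have ST : msfbm a xi T w != 0 by apply/eqP => h; apply: hb; right.
apply: range_dim T0 _ _.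
- have hc : {within `[0, +oo[%classic, continuous (msfbm a xi)^~ w}.
    rewrite /msfbm; apply: (within_cont_sum (F := fun i t => xi i t w)) => i.
    exact: (hs i).1 w.
  apply: continuous_subspaceW hc.
  move=> t /=; rewrite in_itv /= => /andP[t0 _].
  rewrite in_itv /= andbT; exact: t0.
- have -> : msfbm a xi 0 w = 0 by rewrite /msfbm big1 // => i _; rewrite x0 mulr0.
  by rewrite eq_sym.
Qed.
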